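(* Let $(V_1,\dots,V_n)$ be an $n$-tuple of doubly non-commuting isometries on $H$, let $A=\{i_1,\dots,i_l\}\subseteq\{1,\dots,n\}$ ($l$ distinct indices, possibly $l=0$) with $A^c=\{j_1,\dots,j_{n-l}\}$, and let $W_A=\bigcap_{m_{j_1},\dots,m_{j_{n-l}}\ge0}V_{j_1}^{m_{j_1}}\cdots V_{j_{n-l}}^{m_{j_{n-l}}}\big(\bigcap_{i\in A}\ker V_i^*\big)$ (for $A=\emptyset$ read $\bigcap_{i\in A}\ker V_i^*$ as $H$; for $A=\{1,\dots,n\}$, $W_A=\bigcap_{i=1}^n\ker V_i^*$). Then $W_A\subseteq H_A$ and $H_A=\bigoplus_{k_{i_1},\dots,k_{i_l}\ge0}V_{i_1}^{k_{i_1}}\cdots V_{i_l}^{k_{i_l}}(W_A)$ as an orthogonal Hilbert direct sum (for $A=\emptyset$ this reads $H_\emptyset=W_\emptyset$). Furthermore: (1) for every $i\in A^c$, $W_A$ reduces $V_i$ and $V_i|_{W_A}$ is unitary; (2) $(V_i|_{W_A})^*(V_j|_{W_A})=\overline{z_{ij}}(V_j|_{W_A})(V_i|_{W_A})^*$ for all $i\ne j$ in $A^c$; (3) $V_i^*|_{W_A}=0$ for every $i\in A$; (4) for all $r\in\{1,\dots,l\}$ and $k_{i_1},\dots,k_{i_l}\ge0$, $V_{i_r}\big(V_{i_1}^{k_{i_1}}\cdots V_{i_r}^{k_{i_r}}\cdots V_{i_l}^{k_{i_l}}(W_A)\big)=V_{i_1}^{k_{i_1}}\cdots V_{i_r}^{k_{i_r}+1}\cdots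 V_{i_l}^{k_{i_l}}(W_A)$.
   Context: Fix $n\ge1$ and $z_{ij}\in\mathbb T$ ($i\ne j$) with $z_{ji}=\overline{z_{ij}}$; $(V_1,\dots,V_n)$ is doubly non-commuting if the $V_i$ are isometries on $H$ with $V_i^*V_j=\overline{z_{ij}}V_jV_i^*$ for $i\ne j$. For an isometry $S$: $H^{\mathrm{iso}}(S)=\bigoplus_{k\ge0}S^k(\ker S^* )$, $H^{\mathrm{uni}}(S)=\bigcap_{k\ge0}S^k(H)$. With $P_i^{\mathrm{iso}},P_i^{\mathrm{uni}}$ the (pairwise commuting) projections onto $H^{\mathrm{iso}}(V_i),H^{\mathrm{uni}}(V_i)$, set $H_A=\big(\prod_{i\in A}P_i^{\mathrm{iso}}\prod_{i\in A^c}P_i^{\mathrm{uni}}\big)(H)$, where $A^c$ is the complement in $\{1,\dots,n\}$ and empty products are the identity. Subspaces are closed. *)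

(* Defs.v *)
From mathcomp Require Import all_boot all_algebra.
From mathcomp Require Import reals complex.
From Stdlib Require Import ClassicalEpsilon.
Set Implicit Arguments.
Unset Strict Implicit.
Unset Printing Implicit Defensive.
Import GRing.Theory Num.Theory.
Local Open Scope ring_scope.

Section Hilbert.
Variable R : realType.
Variable H : lmodType R[i].
Variable ip : H -> H -> R[i].

Definition hnorm (x : H) : R := Num.sqrt (complex.Re (ip x x)).

Definition cauchy_seq (u : nat -> H) : Prop :=
  forall e : R, 0 < e -> exists N : nat, forall p q : nat,
    (N <= p)%N -> (N <= q)%N -> hnorm (u p - u q) < e.

Definition converges_to (u : nat -> H) (l : H) : Prop :=
  forall e : R, 0 < e -> exists N : nat, forall p : nat,
    (N <= p)%N -> hnorm (u p - l) < e.

Definition is_hilbert : Prop :=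
  [/\ (forall (a : R[i]) (x y w : H), ip (a *: x + y) w = a * ip x w + ip y w),
      (forall x y : H, ip y x = (ip x y)^*),
      (forall x : H, 0 <= ip x x),
      (forall x : H, ip x x = 0 -> x = 0) &
      (forall u : nat -> H, cauchy_seq u -> exists l : H, converges_to u l)].

Definition seteq (M N : H -> Prop) : Prop := forall x, M x <-> N x.

Definition subspace (M : H -> Prop) : Prop :=
  M 0 /\ (forall (a : R[i]) (x y : H), M x -> M y -> M (a *: x + y)).

Definition closed_set (M : H -> Prop) : Prop :=
  forall (u : nat -> H) (l : H), (forall p, M (u p)) -> converges_to u l -> M l.

Definition closed_subspace (M : H -> Prop) : Prop := subspace M /\ closed_set M.

Definition closed_span (U : H -> Prop) : H -> Prop :=
  fun x => forall M, closed_subspace M -> (forall y, U y -> M y) -> M x.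

Definition orth_dsum (I : Type) (F : I -> H -> Prop) (X : H -> Prop) : Prop :=
  [/\ (forall k, closed_subspace (F k)),
      (forall k k', k <> k' -> forall x y, F k x -> F k' y -> ip x y = 0) &
      seteq X (closed_span (fun y => exists k, F k y))].

Definition img (T : H -> H) (M : H -> Prop) : H -> Prop :=
  fun y => exists x, M x /\ y = T x.

Definition kerS (T : H -> H) : H -> Prop := fun x => T x = 0.

Definition h_isometry (T : {linear H -> H}) : Prop :=
  forall x, hnorm (T x) = hnorm x.

Definition h_adjoint (T S : H -> H) : Prop :=
  forall x y, ip (T x) y = ip x (S y).

(* orthogonal projection onto M (well defined when M is a closed subspace) *)
Definition orthproj (M : H -> Prop) (x : H) : H :=
  epsilon (inhabits (0 : H))
    (fun y => M y /\ forall w, M w -> ip (x - y) w = 0).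

(* H^iso(S) = closed span of the S^k(ker S^* ), k >= 0; Sa is the adjoint of S *)
Definition Hiso (S Sa : H -> H) : H -> Prop :=
  closed_span (fun y => exists k : nat, img (iter k S) (kerS Sa) y).

Definition Huni (S : H -> H) : H -> Prop :=
  fun x => forall k : nat, img (iter k S) (fun _ => True) x.

Variable n : nat.

Definition prodV (V : 'I_n -> H -> H) (s : seq 'I_n) (m : 'I_n -> nat) : H -> H :=
  foldr (fun j f => fun x => iter (m j) (V j) (f x)) id s.

(* H_A = (prod_{i in A} P_i^iso prod_{i in A^c} P_i^uni)(H) *)
Definition HA (V : 'I_n -> H -> H) (Va : 'I_n -> H -> H) (A : {set 'I_n}) : H -> Prop :=
  let Puni := foldr (fun j f => fun x => orthproj (Huni (V j)) (f x)) id (enum (~: A)) in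
  let P := foldr (fun i f => fun x => orthproj (Hiso (V i) (Va i)) (f x)) Puni (enum A) in
  img P (fun _ => True).

Definition WA (V : 'I_n -> H -> H) (Va : 'I_n -> H -> H) (A : {set 'I_n}) : H -> Prop :=
  fun x => forall m : 'I_n -> nat,
    img (prodV V (enum (~: A)) m) (fun y => forall i, i \in A -> Va i y = 0) x.

End Hilbert.

(* Main.v *)
Require Import Defs.
From mathcomp Require Import all_boot all_order all_algebra.
From mathcomp Require Import reals complex.
From mathcomp Require Import classical_sets.
From mathcomp Require Import ring lra.
From Stdlib Require Import ClassicalEpsilon Classical FunctionalExtensionality ProofIrrelevance.
Set Implicit Arguments.
Unset Strict Implicit.
Unset Printing Implicit Defensive.
Import Order.TTheory GRing.Theory Num.Theory.
Local Open Scope complex_scope.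
Local Open Scope ring_scope.

Section Hilb.
Variable R : realType.
Variable H : lmodType R[i].
Variable ip : H -> H -> R[i].
Hypothesis ipDl : forall (a : R[i]) (x y w : H), ip (a *: x + y) w = a * ip x w + ip y w.
Hypothesis ipC : forall x y : H, ip y x = (ip x y)^*.
Hypothesis ipge0 : forall x : H, 0 <= ip x x.
Hypothesis ipdef : forall x : H, ip x x = 0 -> x = 0.
Hypothesis ipcompl : forall u : nat -> H, cauchy_seq ip u -> exists l : H, converges_to ip u l.

Definition nrm2 (x : H) : R := complex.Re (ip x x).

Lemma ip0l w : ip 0 w = 0.
Proof.
have h := ipDl 1 0 0 w; rewrite scale1r addr0 mul1r in h.
by apply: (@addrI _ (ip 0 w)); rewrite addr0 -h.
Qed.

Lemma ipZl a x w : ip (a *: x) w = a * ip x w.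
Proof. by have := ipDl a x 0 w; rewrite addr0 ip0l addr0. Qed.

Lemma ipDl1 x y w : ip (x + y) w = ip x w + ip y w.
Proof. by have := ipDl 1 x y w; rewrite scale1r mul1r. Qed.

Lemma ipNl x w : ip (- x) w = - ip x w.
Proof. by rewrite -scaleN1r ipZl mulN1r. Qed.

Lemma ipBl x y w : ip (x - y) w = ip x w - ip y w.
Proof. by rewrite ipDl1 ipNl. Qed.

Lemma ip0r w : ip w 0 = 0.
Proof. by rewrite ipC ip0l conjC0. Qed.

Lemma ipZr a x w : ip w (a *: x) = a^* * ip w x.
Proof. by rewrite ipC ipZl rmorphM /= -ipC. Qed.

Lemma ipDr x y w : ip w (x + y) = ip w x + ip w y.
Proof. by rewrite ipC ipDl1 rmorphD /= -!ipC. Qed.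

Lemma ipNr x w : ip w (- x) = - ip w x.
Proof. by rewrite ipC ipNl rmorphN /= -ipC. Qed.

Lemma ipBr x y w : ip w (x - y) = ip w x - ip w y.
Proof. by rewrite ipDr ipNr. Qed.

Lemma ipE x : ip x x = (nrm2 x)%:C.
Proof.
have := ipge0 x; rewrite lecE /nrm2; case: (ip x x) => a b /= /andP[/eqP -> _].
by [].
Qed.

Lemma nrm2_ge0 x : 0 <= nrm2 x.
Proof. by have := ipge0 x; rewrite ipE lecR. Qed.

Lemma nrm2_eq0 x : nrm2 x = 0 -> x = 0.
Proof. by move=> h; apply: ipdef; rewrite ipE h. Qed.

Lemma nrm20 : nrm2 0 = 0.
Proof. by rewrite /nrm2 ip0l. Qed.

Lemma ip_extr x y : (forall w, ip w x = ip w y) -> x = y.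
Proof.
move=> h; apply/eqP; rewrite -subr_eq0; apply/eqP/ipdef.
by rewrite ipBr h subrr.
Qed.

Lemma ip_extl x y : (forall w, ip x w = ip y w) -> x = y.
Proof.
move=> h; apply: ip_extr => w; by rewrite ipC h -ipC.
Qed.

Lemma ReD (a b : R[i]) : complex.Re (a + b) = complex.Re a + complex.Re b.
Proof. by case: a; case: b. Qed.
Lemma ReN (a : R[i]) : complex.Re (- a) = - complex.Re a.
Proof. by case: a. Qed.
Lemma ReJ (a : R[i]) : complex.Re (a^*) = complex.Re a.
Proof. by case: a. Qed.
Lemma ReM (k : R) (a : R[i]) : complex.Re (k%:C * a) = k * complex.Re a.
Proof. by case: a => x y /=; rewrite mul0r subr0. Qed.
Lemma conjR (k : R) : (k%:C)^* = k%:C :> R[i].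
Proof. by apply/eqP; rewrite eq_complex /= oppr0 !eqxx. Qed.

Lemma nrm2D x y : nrm2 (x + y) = nrm2 x + 2 * complex.Re (ip x y) + nrm2 y.
Proof.
rewrite /nrm2 ipDl1 !ipDr (ipC y x) !ReD ReJ; lra.
Qed.

Lemma nrm2N x : nrm2 (- x) = nrm2 x.
Proof. by rewrite /nrm2 ipNl ipNr opprK. Qed.

Lemma nrm2Zr (t : R) x : nrm2 (t%:C *: x) = t ^+ 2 * nrm2 x.
Proof. by rewrite /nrm2 ipZl ipZr conjR mulrA ipE -rmorphM /= mulr0 subr0 expr2. Qed.

Lemma ReipZr (t : R) x y : complex.Re (ip x (t%:C *: y)) = t * complex.Re (ip x y).
Proof. by rewrite ipZr conjR ReM. Qed.

Lemma quad (X Y r : R) : 0 <= X -> 0 <= Y ->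
  (forall t, 0 <= X + 2 * t * r + t ^+ 2 * Y) -> r ^+ 2 <= X * Y.
Proof.
move=> X0 Y0 h.
have [Yz|Yp] := eqVneq Y 0.
  subst Y; have [rz|rn] := eqVneq r 0; first by subst r; rewrite expr0n mulr0.
  have := h (- (X + 1) / (2 * r)).
  have -> : X + 2 * (- (X + 1) / (2 * r)) * r + (- (X + 1) / (2 * r)) ^+ 2 * 0 = -1.
    by field; rewrite rn.
  by rewrite ler0N1.
have Ypos : 0 < Y by rewrite lt_neqAle eq_sym Yp Y0.
have := h (- r / Y).
have -> : X + 2 * (- r / Y) * r + (- r / Y) ^+ 2 * Y = (X * Y - r ^+ 2) / Y.
  by field.
by rewrite pmulr_lge0 ?invr_gt0 // subr_ge0.
Qed.

Lemma CS x y : complex.Re (ip x y) ^+ 2 <= nrm2 x * nrm2 y.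
Proof.
apply: quad; [exact: nrm2_ge0 | exact: nrm2_ge0 | move=> t].
have := nrm2_ge0 (x + t%:C *: y).
by rewrite nrm2D nrm2Zr ReipZr mulrA.
Qed.

Lemma hnorm_ge0 x : 0 <= hnorm ip x.
Proof. exact: sqrtr_ge0. Qed.

Lemma hnorm_sq x : hnorm ip x ^+ 2 = nrm2 x.
Proof. by rewrite sqr_sqrtr // nrm2_ge0. Qed.

Lemma hnorm_eq0 x : hnorm ip x = 0 -> x = 0.
Proof. by move=> h; apply: nrm2_eq0; rewrite -hnorm_sq h expr0n. Qed.

Lemma hnorm0 : hnorm ip 0 = 0.
Proof. by rewrite /hnorm -/(nrm2 0) nrm20 sqrtr0. Qed.

Lemma hnormN x : hnorm ip (- x) = hnorm ip x.
Proof. by rewrite /hnorm -!/(nrm2 _) nrm2N. Qed.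

Lemma hnormB x y : hnorm ip (x - y) = hnorm ip (y - x).
Proof. by rewrite -hnormN opprB. Qed.

Lemma sq_le (c d : R) : 0 <= d -> c ^+ 2 <= d ^+ 2 -> c <= d.
Proof. move=> d0 h; nra. Qed.

Lemma CS' x y : complex.Re (ip x y) <= hnorm ip x * hnorm ip y.
Proof.
have := CS x y; rewrite -!hnorm_sq.
have := hnorm_ge0 x; have := hnorm_ge0 y.
move: (hnorm ip x) (hnorm ip y) (complex.Re (ip x y)) => a b c a0 b0 h.
apply: sq_le; first exact: mulr_ge0.
by rewrite exprMn.
Qed.

Lemma hnormD x y : hnorm ip (x + y) <= hnorm ip x + hnorm ip y.
Proof.
have h := nrm2D x y; rewrite -!hnorm_sq in h.
have := CS' x y; have := hnorm_ge0 x; have := hnorm_ge0 y; have := hnorm_ge0 (x + y).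
move: h; move: (hnorm ip x) (hnorm ip y) (hnorm ip (x + y)) (complex.Re (ip x y)).
move=> a b c r h c0 b0 a0 hr.
have h2 : c ^+ 2 <= (a + b) ^+ 2 by rewrite h; nra.
apply: sq_le => //; exact: addr_ge0.
Qed.

Lemma hnorm_lt v e : 0 < e -> nrm2 v < e ^+ 2 -> hnorm ip v < e.
Proof.
move=> e0 h; have := hnorm_ge0 v; rewrite -hnorm_sq in h.
move: h; move: (hnorm ip v) => a h a0; nra.
Qed.

Lemma hnorm_ltE v e : hnorm ip v < e -> nrm2 v < e ^+ 2.
Proof.
move=> h; have := hnorm_ge0 v; rewrite -hnorm_sq.
move: h; move: (hnorm ip v) => a h a0; nra.
Qed.


Definition lin (T : H -> H) := forall a x y, T (a *: x + y) = a *: T x + T y.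

Section LinT.
Variable T : H -> H.
Hypothesis hT : lin T.
Lemma lin0 : T 0 = 0.
Proof.
have := hT 1 0 0; rewrite scale1r addr0 scale1r => h.
by apply: (@addrI _ (T 0)); rewrite addr0 -h.
Qed.
Lemma linD x y : T (x + y) = T x + T y.
Proof. by have := hT 1 x y; rewrite !scale1r. Qed.
Lemma linZ a x : T (a *: x) = a *: T x.
Proof. by have := hT a x 0; rewrite !addr0 lin0 addr0. Qed.
Lemma linN x : T (- x) = - T x.
Proof. by rewrite -scaleN1r linZ scaleN1r. Qed.
Lemma linB x y : T (x - y) = T x - T y.
Proof. by rewrite linD linN. Qed.
End LinT.

Lemma lin_comp T1 T2 : lin T1 -> lin T2 -> lin (fun x => T1 (T2 x)).
Proof. by move=> h1 h2 a x y; rewrite h2 h1. Qed.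

Lemma lin_id : lin id.
Proof. by []. Qed.

Lemma lin_iter T k : lin T -> lin (iter k T).
Proof.
move=> hT; elim: k => [|k IH] a x y //=.
by rewrite IH hT.
Qed.

Lemma subspaceD (M : H -> Prop) x y : subspace M -> M x -> M y -> M (x + y).
Proof. by case=> _ h mx my; have := h 1 x y mx my; rewrite scale1r. Qed.
Lemma subspaceZ (M : H -> Prop) a x : subspace M -> M x -> M (a *: x).
Proof. by case=> h0 h mx; have := h a x 0 mx h0; rewrite addr0. Qed.
Lemma subspaceN (M : H -> Prop) x : subspace M -> M x -> M (- x).
Proof. by move=> hM mx; rewrite -scaleN1r; apply: subspaceZ. Qed.
Lemma subspaceB (M : H -> Prop) x y : subspace M -> M x -> M y -> M (x - y).
Proof. by move=> hM mx my; apply: subspaceD => //; apply: subspaceN. Qed.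

Lemma arch (e : R) : 0 < e -> exists N : nat, forall p, (N <= p)%N -> (p.+1%:R)^-1 < e.
Proof.
move=> e0; exists (Num.Def.archi_bound (e^-1)) => p hp.
have h1 : e^-1 < (Num.Def.archi_bound e^-1)%:R by apply: archi_boundP; rewrite invr_ge0 ltW.
have h2 : (Num.Def.archi_bound e^-1)%:R <= p.+1%:R :> R by rewrite ler_nat; apply: leqW.
rewrite invf_plt ?posrE ?ltr0Sn //.
exact: lt_le_trans h1 h2.
Qed.

Lemma conv_nrm2 u l : converges_to ip u l ->
  forall eta, 0 < eta -> exists N, forall p, (N <= p)%N -> nrm2 (u p - l) < eta.
Proof.
move=> hc eta eta0; have s0 : 0 < Num.sqrt eta by rewrite sqrtr_gt0.
have [N hN] := hc (Num.sqrt eta) s0.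
exists N => p hp; have := hnorm_ltE (hN p hp); by rewrite sqr_sqrtr // ltW.
Qed.

Lemma hnorm_sub3 a b c : hnorm ip (a - c) <= hnorm ip (a - b) + hnorm ip (b - c).
Proof.
have -> : a - c = (a - b) + (b - c) by rewrite addrA subrK.
exact: hnormD.
Qed.

Lemma conv_uniq u l l' : converges_to ip u l -> converges_to ip u l' -> l = l'.
Proof.
move=> h1 h2.
have key : forall e, 0 < e -> hnorm ip (l - l') < e.
  move=> e e0; have e20 : 0 < e / 2 by rewrite divr_gt0.
  have [N1 hN1] := h1 _ e20; have [N2 hN2] := h2 _ e20.
  have t1 := hN1 (maxn N1 N2) (leq_maxl _ _); have t2 := hN2 (maxn N1 N2) (leq_maxr _ _).
  have t := hnorm_sub3 l (u (maxn N1 N2)) l'; rewrite (hnormB l (u _)) in t.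
  lra.
apply/eqP; rewrite -subr_eq0; apply/eqP/hnorm_eq0.
have := hnorm_ge0 (l - l'); rewrite le_eqVlt => /orP[/eqP <-//|hp].
by have := key _ hp; rewrite ltxx.
Qed.

Lemma conv_cauchy u l : converges_to ip u l -> cauchy_seq ip u.
Proof.
move=> h e e0; have e20 : 0 < e / 2 by rewrite divr_gt0.
have [N hN] := h _ e20; exists N => p q hp hq.
have t1 := hN p hp; have t2 := hN q hq; have t := hnorm_sub3 (u p) l (u q).
rewrite (hnormB l (u q)) in t; lra.
Qed.

Lemma conv_cont T u l : lin T -> (forall x, hnorm ip (T x) <= hnorm ip x) ->
  converges_to ip u l -> converges_to ip (fun p => T (u p)) (T l).
Proof.
move=> hT hb hc e e0; have [N hN] := hc e e0; exists N => p hp.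
by rewrite -linB //; apply: le_lt_trans (hb _) (hN p hp).
Qed.

Lemma closed_pre (M : H -> Prop) T : closed_subspace ip M -> lin T ->
  (forall x, hnorm ip (T x) <= hnorm ip x) -> closed_subspace ip (fun x => M (T x)).
Proof.
move=> [[M0 MD] Mc] hT hb; split; first split.
- by rewrite lin0.
- by move=> a x y mx my; rewrite hT; apply: MD.
- by move=> u l hu hc; apply: (Mc (fun p => T (u p))) => //; apply: conv_cont.
Qed.

Lemma ReJM0 (c : R[i]) : complex.Re (c^* * c) = 0 -> c = 0.
Proof.
case: c => a b /= h; apply/eqP; rewrite eq_complex /=.
have : a * a + b * b = 0 by move: h; rewrite mulNr opprK.
move=> h'; apply/andP; split; apply/eqP; nra.
Qed.

Lemma Re_small (r : R) (N : R) : 0 <= N ->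
  (forall eta, 0 < eta -> r ^+ 2 <= eta * N) -> r = 0.
Proof.
move=> N0 h.
have : r ^+ 2 <= 0.
  apply/ler_addgt0Pr => eta eta0; rewrite add0r.
  have e1 : 0 < eta / (N + 1) by rewrite divr_gt0 // ltr_wpDl.
  apply: (le_trans (h _ e1)).
  rewrite mulrAC ler_pdivrMr ?ltr_wpDl //; nra.
move=> h2; nra.
Qed.

Lemma closed_orth w : closed_subspace ip (fun x => ip x w = 0).
Proof.
split; first split.
- exact: ip0l.
- by move=> a x y hx hy; rewrite ipDl hx hy mulr0 addr0.
move=> u l hu hc.
have gen : forall w', (forall p, ip (u p) w' = 0) -> complex.Re (ip l w') = 0.
  move=> w' hw'; apply: (@Re_small _ (nrm2 w')); first exact: nrm2_ge0.
  move=> eta eta0; have [N hN] := conv_nrm2 hc eta0.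
  have e : ip l w' = ip (l - u N) w' by rewrite ipBl hw' subr0.
  rewrite e; apply: (le_trans (CS _ _)); rewrite -nrm2N opprB.
  by apply: ler_wpM2r; [exact: nrm2_ge0 | exact: ltW (hN N (leqnn N))].
apply: ReJM0; rewrite -ipZr; apply: gen => p; by rewrite ipZr hu mulr0.
Qed.

Lemma closed_span_cs U : closed_subspace ip (closed_span ip U).
Proof.
split; first split.
- by move=> M [[M0 _] _] _.
- move=> a x y hx hy M hM hU; case: (hM) => [[_ MD] _]; apply: MD; [exact: hx | exact: hy].
- move=> u l hu hc M hM hU; case: (hM) => [_ Mc]; apply: (Mc u) => // p; exact: hu.
Qed.

Lemma closed_span_sub U x : U x -> closed_span ip U x.
Proof. by move=> hx M _ hU; apply: hU. Qed.

Lemma closed_span_min U M : closed_subspace ip M -> (forall y, U y -> M y) ->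
  forall x, closed_span ip U x -> M x.
Proof. by move=> hM hU x hx; apply: hx. Qed.

Lemma img_sub (T : H -> H) (M : H -> Prop) : lin T -> subspace M -> subspace (img T M).
Proof.
move=> hT [M0 MD]; split; first by exists 0; rewrite lin0.
move=> a _ _ [x [mx ->]] [y [my ->]]; exists (a *: x + y); split; first exact: MD.
by rewrite hT.
Qed.

Lemma img_closed (T : H -> H) (M : H -> Prop) : lin T -> (forall x, hnorm ip (T x) = hnorm ip x) ->
  closed_set ip M -> closed_set ip (img T M).
Proof.
move=> hT hn hM u l hu hc.
pose w p := epsilon (inhabits (0:H)) (fun x => M x /\ u p = T x).
have hw : forall p, M (w p) /\ u p = T (w p).
  move=> p; apply: (epsilon_spec (inhabits (0:H)) (fun x => M x /\ u p = T x)).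
  by have [x [mx ->]] := hu p; exists x.
have cw : cauchy_seq ip w.
  move=> e e0; have [N hN] := conv_cauchy hc e0; exists N => p q hp hq.
  by rewrite -hn linB // -!(proj2 (hw _)); apply: hN.
have [x hx] := ipcompl cw.
have Mx : M x by apply: (hM w) => // p; exact: (proj1 (hw p)).
exists x; split => //.
apply: (conv_uniq hc) => e e0; have [N hN] := hx e e0; exists N => p hp.
by rewrite (proj2 (hw p)) -linB // hn; apply: hN.
Qed.

Lemma paral a b : nrm2 (a - b) + nrm2 (a + b) = 2 * nrm2 a + 2 * nrm2 b.
Proof. rewrite !nrm2D nrm2N ipNr ReN; lra. Qed.

Lemma two_mid (x p q : H) :
  (x - p) + (x - q) = (2:R)%:C *: (x - ((2:R)^-1)%:C *: (p + q)).
Proof.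
rewrite scalerBr scalerA -rmorphM /= mulfV ?pnatr_eq0 // scale1r.
have -> : (2:R)%:C = 2%:R :> R[i] by rewrite rmorph_nat.
rewrite scaler_nat mulr2n; rewrite opprD; rewrite !addrA.
by rewrite -!addrA; congr (_ + _); rewrite addrC -!addrA; congr (_ + _); rewrite addrC.
Qed.

Lemma subsub (x p q : H) : (x - q) - (x - p) = p - q.
Proof. by rewrite opprB addrC addrA subrK. Qed.

Lemma PT (M : H -> Prop) : closed_subspace ip M ->
  forall x, exists y, M y /\ forall w, M w -> ip (x - y) w = 0.
Proof.
move=> hM x; have [[M0 MD] Mc] := hM; have sM : subspace M by [].
pose E := fun r : R => exists m, M m /\ r = nrm2 (x - m).
have Ene : classical_sets.nonempty E by exists (nrm2 (x - 0)), 0.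
have Elb : classical_sets.has_lbound E.
  by exists 0 => r [m [_ ->]]; exact: nrm2_ge0.
have Einf : classical_sets.has_inf E by split.
pose d := inf E.
have d0 : 0 <= d by apply: lb_le_inf => // r [m [_ ->]]; exact: nrm2_ge0.
have dle : forall m, M m -> d <= nrm2 (x - m).
  by move=> m mm; apply: ge_inf => //; exists m.
pose P p m := M m /\ nrm2 (x - m) < d + (p.+1%:R)^-1.
pose ms p := epsilon (inhabits (0:H)) (P p).
have hms : forall p, P p (ms p).
  move=> p; apply: (epsilon_spec (inhabits (0:H)) (P p)).
  have pp : 0 < (p.+1%:R)^-1 :> R by rewrite invr_gt0 ltr0Sn.
  have [r [m [mm ->]] hr] := inf_adherent pp Einf.
  by exists m.
have epsle : forall p q, (p <= q)%N -> (q.+1%:R)^-1 <= (p.+1%:R)^-1 :> R.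
  by move=> p q hpq; rewrite lef_pV2 ?posrE ?ltr0Sn // ler_nat.
have cs : cauchy_seq ip ms.
  move=> e e0; have e40 : 0 < e ^+ 2 / 4 by rewrite divr_gt0 // exprn_gt0.
  have [N hN] := arch e40; exists N => p q hp hq.
  apply: hnorm_lt => //.
  have pa := paral (x - ms q) (x - ms p).
  rewrite -(subsub x).
  rewrite two_mid nrm2Zr in pa.
  have mid : M (((2:R)^-1)%:C *: (ms q + ms p)).
    by apply: subspaceZ => //; apply: subspaceD => //; [exact: (hms q).1 | exact: (hms p).1].
  have dmid : d <= nrm2 (x - ((2:R)^-1)%:C *: (ms q + ms p)) := dle _ mid.
  have t1 := (hms p).2; have t2 := (hms q).2.
  have t3 := hN N (leqnn N); have t4 := epsle _ _ hp; have t5 := epsle _ _ hq.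
  move: pa dmid t1 t2 t3 t4 t5.
  move: (nrm2 (x - ((2:R)^-1)%:C *: (ms q + ms p))) => D.
  move: (nrm2 (x - ms p)) (nrm2 (x - ms q)) (nrm2 (x - ms q - (x - ms p))) => A B C.
  move: ((p.+1%:R)^-1 : R) ((q.+1%:R)^-1 : R) ((N.+1%:R)^-1 : R) => a b c.
  move=> *; nra.
have [m hm] := ipcompl cs.
have Mm : M m by apply: (Mc ms) => // p; exact: (hms p).1.
have dm : nrm2 (x - m) <= d.
  apply/ler_addgt0Pr => eta eta0.
  have e20 : 0 < eta / 2 by rewrite divr_gt0.
  pose del := Num.min 1 (eta / (2 * (2 * d + 3))).
  have del0 : 0 < del by rewrite lt_min ltr01 /= divr_gt0 // mulr_gt0 //; lra.
  have [N1 hN1] := arch e20; have [N2 hN2] := hm del del0.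
  pose p := maxn N1 N2.
  have t1 := hN1 p (leq_maxl _ _); have t2 := hN2 p (leq_maxr _ _).
  have t3 := (hms p).2.
  have t4 := hnorm_sub3 x (ms p) m.
  have dl1 : del <= 1 by rewrite ge_min lexx.
  have dl2' : del <= eta / (2 * (2 * d + 3)) by rewrite ge_min lexx orbT.
  have Kn0 : 2 * d + 3 != 0 by rewrite gt_eqF //; lra.
  have dl2 : del * (2 * d + 3) <= eta / 2.
    have -> : eta / 2 = eta / (2 * (2 * d + 3)) * (2 * d + 3).
      by rewrite invfM mulrA mulfVK.
    by apply: ler_wpM2r => //; lra.
  rewrite -!hnorm_sq in t3 *.
  have h0 := hnorm_ge0 (x - ms p); have h1 := hnorm_ge0 (x - m); have h2 := hnorm_ge0 (ms p - m).
  have e1 : (p.+1%:R)^-1 <= 1 :> R by rewrite invf_le1 ?ler1n ?ltr0Sn.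
  move: t1 t2 t3 t4 h0 h1 h2 e1.
  move: (hnorm ip (x - ms p)) (hnorm ip (x - m)) (hnorm ip (ms p - m)) => A B C.
  move: ((p.+1%:R)^-1 : R) => a t1 t2 t3 t4 h0 h1 h2 e1.
  have hA : A <= d + 1 by nra.
  have hB : B ^+ 2 <= (A + C) ^+ 2 by nra.
  have hC : C * (2 * A + C) <= del * (2 * d + 3) by nra.
  nra.
exists m; split => // w Mw.
have reZ : forall w, M w -> complex.Re (ip (x - m) w) = 0.
  move=> w' Mw'.
  have Mt : forall t : R, M (m - t%:C *: w').
    by move=> t; apply: subspaceB => //; apply: subspaceZ.
  have q := @quad 0 (nrm2 w') (complex.Re (ip (x - m) w')) (lexx _) (nrm2_ge0 _).
  have : complex.Re (ip (x - m) w') ^+ 2 <= 0.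
    rewrite -(mul0r (nrm2 w')); apply: q => t.
    have := dle _ (Mt t).
    have -> : x - (m - t%:C *: w') = (x - m) + t%:C *: w' by rewrite opprB addrA addrAC -addrA.
    rewrite nrm2D nrm2Zr ReipZr => h; lra.
  move=> h; nra.
apply: ReJM0; rewrite -ipZr; apply: reZ; exact: subspaceZ.
Qed.

Lemma Pr_spec (X : H -> Prop) x : closed_subspace ip X ->
  X (orthproj ip X x) /\ forall w, X w -> ip (x - orthproj ip X x) w = 0.
Proof.
move=> hX.
exact: (epsilon_spec (inhabits (0:H)) (fun y => X y /\ forall w, X w -> ip (x - y) w = 0) (PT hX x)).
Qed.

Lemma Pr_uniq (X : H -> Prop) x y : subspace X ->
  (exists y', X y' /\ forall w, X w -> ip (x - y') w = 0) ->
  X y -> (forall w, X w -> ip (x - y) w = 0) -> orthproj ip X x = y.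
Proof.
move=> hX hex Xy hy.
have [Xp hp] : X (orthproj ip X x) /\ forall w, X w -> ip (x - orthproj ip X x) w = 0.
  exact: (epsilon_spec (inhabits (0:H)) (fun y => X y /\ forall w, X w -> ip (x - y) w = 0) hex).
apply/eqP; rewrite -subr_eq0; apply/eqP/ipdef.
have d : X (orthproj ip X x - y) by apply: subspaceB.
rewrite {1}(_ : orthproj ip X x - y = (x - y) - (x - orthproj ip X x)); last by rewrite subsub.
by rewrite ipBl hy // hp // subrr.
Qed.

Lemma Pr_id (X : H -> Prop) x : subspace X -> X x -> orthproj ip X x = x.
Proof.
move=> hX Xx; apply: Pr_uniq => //.
  by exists x; split => // w _; rewrite subrr ip0l.
by move=> w _; rewrite subrr ip0l.
Qed.

Lemma Pr_lin (X : H -> Prop) : closed_subspace ip X -> lin (orthproj ip X).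
Proof.
move=> hX a x y; have sX : subspace X by case: hX.
have [Xx hx] := Pr_spec x hX; have [Xy hy] := Pr_spec y hX.
apply: Pr_uniq => //.
- by exists (orthproj ip X (a *: x + y)); exact: Pr_spec.
- by apply: subspaceD => //; apply: subspaceZ.
move=> w Xw.
have -> : a *: x + y - (a *: orthproj ip X x + orthproj ip X y)
        = a *: (x - orthproj ip X x) + (y - orthproj ip X y).
  by rewrite scalerBr opprD !addrA; congr (_ + _); rewrite addrAC.
by rewrite ipDl hx ?hy // mulr0 addr0.
Qed.

Lemma Pr_bnd (X : H -> Prop) x : closed_subspace ip X ->
  hnorm ip (orthproj ip X x) <= hnorm ip x.
Proof.
move=> hX; have [Xp hp] := Pr_spec x hX.
set p := orthproj ip X x in Xp hp *.
have e : nrm2 x = nrm2 p + 2 * complex.Re (ip p (x - p)) + nrm2 (x - p).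
  by rewrite -nrm2D addrC subrK.
have z0 : ip p (x - p) = 0 by rewrite ipC hp // conjC0.
rewrite z0 /= mulr0 addr0 in e.
apply: sq_le; first exact: hnorm_ge0.
by rewrite !hnorm_sq e lerDl nrm2_ge0.
Qed.

Lemma Pr_comm (X : H -> Prop) (T S : H -> H) x : closed_subspace ip X -> lin T ->
  (forall u v, ip (T u) v = ip u (S v)) ->
  (forall u, X u -> X (T u)) -> (forall u, X u -> X (S u)) ->
  orthproj ip X (T x) = T (orthproj ip X x).
Proof.
move=> hX hT hTS hXT hXS; have sX : subspace X by case: hX.
have [Xp hp] := Pr_spec x hX.
apply: Pr_uniq => //.
- by exists (orthproj ip X (T x)); exact: Pr_spec.
- exact: hXT.
by move=> w Xw; rewrite -linB // hTS hp //; apply: hXS.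
Qed.

Lemma zero_closed : closed_subspace ip (fun v : H => v = 0).
Proof.
split; first by split => // a x y -> ->; rewrite scaler0 addr0.
move=> u l hu hc; apply: esym; apply: (conv_uniq (u := u)) => //.
by move=> e e0; exists 0%N => p _; rewrite hu subrr hnorm0.
Qed.

Lemma iter_comm (F G : H -> H) (c : R[i]) : lin F -> lin G ->
  (forall x, F (G x) = c *: G (F x)) ->
  forall t x, F (iter t G x) = c ^+ t *: iter t G (F x).
Proof.
move=> hF hG hc; elim=> [|t IH] x /=; first by rewrite expr0 scale1r.
by rewrite hc IH linZ // scalerA exprS.
Qed.

Lemma iter_pres (F : H -> H) (P : H -> Prop) t x :
  (forall y, P y -> P (F y)) -> P x -> P (iter t F x).
Proof. by move=> h; elim: t => //= t IH /IH /h. Qed.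

Section Ops.
Variable n : nat.
Variable z : 'I_n -> 'I_n -> R[i].
Hypothesis hz : forall i j : 'I_n, i != j -> `|z i j| = 1 /\ z j i = (z i j)^*.
Variable V : 'I_n -> {linear H -> H}.
Variable Va : 'I_n -> H -> H.
Hypothesis hiso : forall i, h_isometry ip (V i).
Hypothesis hadj : forall i, h_adjoint ip (V i) (Va i).
Hypothesis hdnc : forall i j : 'I_n, i != j ->
            forall x, Va i (V j x) = (z i j)^* *: V j (Va i x).

Lemma linV i : lin (V i).
Proof. by move=> a x y; rewrite linearP. Qed.

Lemma adjr i y w : ip y (V i w) = ip (Va i y) w.
Proof. by rewrite ipC hadj -ipC. Qed.

Lemma adjl i y w : ip (Va i y) w = ip y (V i w).
Proof. by rewrite adjr. Qed.

Lemma ipVV i x : ip (V i x) (V i x) = ip x x.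
Proof.
rewrite !ipE; congr (_ %:C).
by rewrite -!hnorm_sq -[hnorm ip (V i x)]/(hnorm ip (V i x)) hiso.
Qed.

Lemma conj_i : ('i : R[i])^* = - 'i.
Proof. by apply/eqP; rewrite eq_complex /= oppr0 !eqxx. Qed.

Lemma ipVV2 i x y : ip (V i x) (V i y) = ip x y.
Proof.
pose f x y := ip (V i x) (V i y) - ip x y.
have f0 : forall x, f x x = 0 by move=> u; rewrite /f ipVV subrr.
have fD : forall x y, f (x + y) (x + y) = f x x + f x y + f y x + f y y.
  move=> u v; rewrite /f !(linD (linV i)) !ipDl1 !ipDr; ring.
have fZ : forall (a : R[i]) x y, f (a *: x) y = a * f x y.
  by move=> a u v; rewrite /f !(linZ (linV i)) !ipZl mulrBr.
have fZr : forall (a : R[i]) x y, f x (a *: y) = a^* * f x y.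
  by move=> a u v; rewrite /f !(linZ (linV i)) !ipZr mulrBr.
have h1 : f x y + f y x = 0 by have := fD x y; rewrite !f0 => ->; ring.
have h2 := fD x ('i *: y); rewrite !f0 fZ fZr conj_i in h2.
have h3 : f x y = f y x.
  have : 'i * (f y x - f x y) = 0.
    by rewrite (_ : 'i * (f y x - f x y) = 0 + -'i * f x y + 'i * f y x + 0); [rewrite -h2 | ring].
  move/eqP; rewrite mulf_eq0 => /orP[|]; first by rewrite eq_complex /= oner_eq0 andbF.
  by rewrite subr_eq0 => /eqP.
have : 2 * f x y = 0 by rewrite mulr2n mulrDl mul1r {2}h3 h1.
move/eqP; rewrite mulf_eq0 pnatr_eq0 /= /f subr_eq0 => /eqP //.
Qed.

Lemma VaV i x : Va i (V i x) = x.
Proof. by apply: ip_extr => w; rewrite -hadj ipVV2. Qed.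

Lemma linVa i : lin (Va i).
Proof.
move=> a x y; apply: ip_extr => w.
by rewrite -hadj ipDr ipZr !hadj -ipZr -ipDr.
Qed.

Lemma hnormV i x : hnorm ip (V i x) = hnorm ip x.
Proof. exact: hiso. Qed.

Lemma bndV i x : hnorm ip (V i x) <= hnorm ip x.
Proof. by rewrite hnormV. Qed.

Lemma bndVa i x : hnorm ip (Va i x) <= hnorm ip x.
Proof.
have h : nrm2 (Va i x) <= hnorm ip (Va i x) * hnorm ip x.
  by rewrite /nrm2 adjl mulrC -(hnormV i (Va i x)); apply: CS'.
rewrite -hnorm_sq in h; have := hnorm_ge0 (Va i x); have := hnorm_ge0 x.
move: h; move: (hnorm ip (Va i x)) (hnorm ip x) => a b h b0 a0; nra.
Qed.

Lemma zz1 i j : i != j -> z i j * (z i j)^* = 1.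
Proof. by move=> hij; rewrite -normCK (hz hij).1 expr1n. Qed.

Lemma commV a b x : a != b -> V a (V b x) = z a b *: V b (V a x).
Proof.
move=> hab; set c := z a b.
set y := V a (V b x) - c *: V b (V a x).
have h1 : Va a y = 0.
  rewrite /y (linB (linVa a)) (linZ (linVa a)) VaV hdnc // VaV scalerA -/c.
  by rewrite /c zz1 // scale1r subrr.
have h2 : Va b y = 0.
  have hba : b != a by rewrite eq_sym.
  rewrite /y (linB (linVa b)) (linZ (linVa b)) VaV hdnc // VaV (hz hab).2 conjCK.
  by rewrite subrr.
apply/eqP; rewrite -subr_eq0; apply/eqP/ipdef.
by rewrite -/y {2}/y ipBr ipZr !adjr h1 h2 (lin0 (linVa a)) (lin0 (linVa b)) !ip0l mulr0 subrr.
Qed.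

Lemma ipiter i t x y : ip (iter t (V i) x) y = ip x (iter t (Va i) y).
Proof.
elim: t x y => [|t IH] x y //=.
by rewrite hadj IH -iterSr.
Qed.

Lemma iterVaV i t x : iter t (Va i) (iter t (V i) x) = x.
Proof. by elim: t x => [|t IH] x //; rewrite iterSr iterS VaV IH. Qed.

Lemma ipiterVV i t x y : ip (iter t (V i) x) (iter t (V i) y) = ip x y.
Proof. by rewrite ipiter iterVaV. Qed.

Definition Ker i := fun y : H => Va i y = 0.
Definition Hu i := Huni (fun x => V i x).
Definition Hi i := Hiso ip (fun x => V i x) (Va i).

Lemma Ker_sub i : subspace (Ker i).
Proof.
split; first exact: lin0 (linVa i).
by move=> a x y hx hy; rewrite /Ker linVa hx hy scaler0 addr0.
Qed.

Lemma Ker_cs i : closed_subspace ip (Ker i).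
Proof.
exact: (closed_pre zero_closed (linVa i) (bndVa i)).
Qed.

Lemma Ker_V a b y : a != b -> Ker a y -> Ker a (V b y).
Proof. by move=> hab hy; rewrite /Ker hdnc // hy (lin0 (linV b)) scaler0. Qed.

Lemma Ker_Va a b y : a != b -> Ker a y -> Ker a (Va b y).
Proof.
move=> hab hy; apply: ip_extr => w; rewrite -hadj -hadj.
rewrite commV 1?eq_sym // ipZl hadj.
by rewrite /Ker in hy; rewrite hy !ip0r mulr0.
Qed.

Lemma Hu_sub a : subspace (Hu a).
Proof.
split; first by move=> t; exists 0; rewrite (lin0 (lin_iter t (linV a))).
move=> c x y hx hy t; have [x' [_ ->]] := hx t; have [y' [_ ->]] := hy t.
by exists (c *: x' + y'); split => //; rewrite (lin_iter t (linV a)).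
Qed.

Lemma Hu_cs a : closed_subspace ip (Hu a).
Proof.
split; first exact: Hu_sub.
move=> u l hu hc t.
have h : closed_set ip (img (iter t (fun x => V a x)) (fun _ => True)).
  apply: img_closed; first exact: (lin_iter t (linV a)).
    by elim: t => [|t IH] x //=; rewrite hnormV.
  by [].
exact: (h u l (fun p => hu p t) hc).
Qed.

Lemma Hi_cs a : closed_subspace ip (Hi a).
Proof. exact: closed_span_cs. Qed.

Lemma Hi_sub a : subspace (Hi a).
Proof. by case: (Hi_cs a). Qed.

Lemma Hi_gen a t e : Ker a e -> Hi a (iter t (fun x => V a x) e).
Proof. by move=> he; apply: closed_span_sub; exists t, e. Qed.

Lemma Hu_V a b y : Hu a y -> Hu a (V b y).
Proof.
move=> hy t; have [w [_ ->]] := hy t.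
have [<-|hab] := eqVneq a b.
  by exists (V a w); split => //; rewrite -iterS iterSr.
exists (z b a ^+ t *: V b w); split => //.
rewrite (iter_comm (c:=z b a) (linV b) (linV a)); last by move=> x; apply: commV; rewrite eq_sym.
by rewrite (linZ (lin_iter t (linV a))).
Qed.

Lemma Hu_Va a b y : Hu a y -> Hu a (Va b y).
Proof.
move=> hy t; have [<-|hab] := eqVneq a b.
  have [w [_ ->]] := hy t.+1; exists w; split => //.
  by rewrite iterS VaV.
have [w [_ ->]] := hy t.
exists ((z b a)^* ^+ t *: Va b w); split => //.
rewrite (iter_comm (c:=(z b a)^*) (linVa b) (linV a)); last by move=> x; apply: hdnc; rewrite eq_sym.
by rewrite (linZ (lin_iter t (linV a))).
Qed.

Lemma Hi_V a b y : Hi a y -> Hi a (V b y).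
Proof.
move=> hy.
have hc := closed_pre (Hi_cs a) (linV b) (bndV b).
apply: (closed_span_min hc _ hy) => _ [t [e [he ->]]].
have [<-|hab] := eqVneq a b.
  by rewrite -iterS; apply: Hi_gen.
rewrite (iter_comm (c:=z b a) (linV b) (linV a)); last by move=> x; apply: commV; rewrite eq_sym.
by apply: (@subspaceZ (Hi a) _ _ (Hi_sub a)); apply: Hi_gen; apply: Ker_V.
Qed.

Lemma Hi_Va a b y : a != b -> Hi a y -> Hi a (Va b y).
Proof.
move=> hab hy.
have hc := closed_pre (Hi_cs a) (linVa b) (bndVa b).
apply: (closed_span_min hc _ hy) => _ [t [e [he ->]]].
rewrite (iter_comm (c:=(z b a)^*) (linVa b) (linV a)); last by move=> x; apply: hdnc; rewrite eq_sym.
by apply: (@subspaceZ (Hi a) _ _ (Hi_sub a)); apply: Hi_gen; apply: Ker_Va.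
Qed.


Variable A : {set 'I_n}.
Let Vf := fun i => (V i : H -> H).
Definition Kset := fun y : H => forall i, i \in A -> Va i y = 0.
Let W := WA Vf Va A.

Lemma lin_prodV s m : lin (prodV Vf s m).
Proof.
elim: s => [|j s IH] /=; first exact: lin_id.
exact: (lin_comp (lin_iter (m j) (linV j)) IH).
Qed.

Lemma hnorm_prodV s m x : hnorm ip (prodV Vf s m x) = hnorm ip x.
Proof.
elim: s => [|j s IH] //=.
by elim: (m j) => [|t IHt] //=; rewrite /Vf hnormV.
Qed.

Lemma prodV_eq s m m' : (forall j, j \in s -> m j = m' j) ->
  forall x, prodV Vf s m x = prodV Vf s m' x.
Proof.
elim: s => [|j s IH] h x //=.
have h' : forall j', j' \in s -> m j' = m' j' by move=> j' hj'; apply: h; rewrite in_cons hj' orbT.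
by rewrite h ?mem_head // (IH h').
Qed.

Lemma prodV0 s m x : (forall j, j \in s -> m j = 0%N) -> prodV Vf s m x = x.
Proof.
elim: s => [|j s IH] h //=.
have h' : forall j', j' \in s -> m j' = 0%N by move=> j' hj'; apply: h; rewrite in_cons hj' orbT.
by rewrite h ?mem_head //= (IH h').
Qed.

Lemma prodV_single s j t x : uniq s -> j \in s ->
  prodV Vf s (fun j' => if j' == j then t else 0%N) x = iter t (Vf j) x.
Proof.
elim: s => [|j0 s IH] //= /andP[nj0 us]; rewrite in_cons => /orP[/eqP ej|js].
  subst j0; rewrite eqxx prodV0 // => j' hj'; case: eqP => // e; subst j'.
  by rewrite hj' in nj0.
have -> : (j0 == j) = false by apply/negbTE; apply: contraNneq nj0 => ->.
by rewrite /= IH.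
Qed.

Lemma Ker_prodV a s m y : a \notin s -> Ker a y -> Ker a (prodV Vf s m y).
Proof.
elim: s => [|j s IH] //=; rewrite in_cons negb_or => /andP[aj hs] hy.
apply: iter_pres; last exact: IH.
by move=> u hu; apply: Ker_V.
Qed.

Lemma Hu_prodV a s m y : Hu a y -> Hu a (prodV Vf s m y).
Proof.
elim: s => [|j s IH] //= hy; apply: (iter_pres (P := Hu a)); last exact: IH.
by move=> u hu; apply: Hu_V.
Qed.

Lemma Hi_prodV a s m y : Hi a y -> Hi a (prodV Vf s m y).
Proof.
elim: s => [|j s IH] //= hy; apply: (iter_pres (P := Hi a)); last exact: IH.
by move=> u hu; apply: Hi_V.
Qed.

Lemma HuVVa j t x : Hu j x -> iter t (Vf j) (iter t (Va j) x) = x.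
Proof. by move=> hx; have [w [_ ->]] := hx t; rewrite iterVaV. Qed.

Lemma W_back s : (forall j, j \in s -> j \notin A) ->
  forall x, Kset x -> (forall j, j \notin A -> Hu j x) ->
  forall m, exists y, [/\ Kset y, (forall j, j \notin A -> Hu j y) & x = prodV Vf s m y].
Proof.
elim: s => [|j s IH] hs x hK hU m; first by exists x.
have jA : j \notin A by apply: hs; exact: mem_head.
set x' := iter (m j) (Va j) x.
have hK' : Kset x'.
  move=> i iA; apply: (iter_pres (P := Ker i)); last exact: hK.
  by move=> u hu; apply: Ker_Va => //; apply: contraNneq jA => <-.
have hU' : forall j', j' \notin A -> Hu j' x'.
  by move=> j' hj'; apply: (iter_pres (P := Hu j')); [move=> u hu; apply: Hu_Va | exact: hU].
have [y [hy1 hy2 hy3]] := IH (fun j' hj' => hs j' (@mem_behead _ (j :: s) j' hj')) x' hK' hU' m.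
exists y; split => //=; rewrite -hy3 /x'.
by rewrite HuVVa //; apply: hU.
Qed.

Lemma W_iff x : W x <-> Kset x /\ forall j, j \notin A -> Hu j x.
Proof.
split.
  move=> hW; split.
    have [y [hy ->]] := hW (fun _ => 0%N); by rewrite prodV0.
  move=> j jA t.
  have [y [_ ->]] := hW (fun j' => if j' == j then t else 0%N).
  rewrite prodV_single ?enum_uniq //; last by rewrite mem_enum finset.in_setC.
  by exists y.
move=> [hK hU] m.
have hs : forall j, j \in enum (~: A) -> j \notin A.
  by move=> j; rewrite mem_enum finset.in_setC.
have [y [hy1 _ ->]] := W_back hs hK hU m.
by exists y.
Qed.

Lemma Kset_sub : subspace Kset.
Proof.
split; first by move=> i _; exact: (lin0 (linVa i)).
by move=> a x y hx hy i iA; rewrite linVa hx ?hy // scaler0 addr0.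
Qed.

Lemma W_sub : subspace W.
Proof.
split.
  by apply/W_iff; split; [exact: Kset_sub.1 | move=> j _; exact: (Hu_sub j).1].
move=> a x y /W_iff [hx1 hx2] /W_iff [hy1 hy2]; apply/W_iff; split.
  by apply: Kset_sub.2.
by move=> j jA; apply: (Hu_sub j).2; [exact: hx2 | exact: hy2].
Qed.

Lemma W_closed : closed_set ip W.
Proof.
move=> u l hu hc; apply/W_iff; split.
  move=> i iA; have [_ hcl] := Ker_cs i.
  by apply: (hcl u) => // p; have /W_iff [h _] := hu p; apply: h.
move=> j jA; have [_ hcl] := Hu_cs j.
by apply: (hcl u) => // p; have /W_iff [_ h] := hu p; apply: h.
Qed.

Lemma W_V i x : i \notin A -> W x -> W (V i x).
Proof.
move=> iA /W_iff [hK hU]; apply/W_iff; split.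
  by move=> a aA; apply: Ker_V; [apply: contraNneq iA => <- | exact: hK].
by move=> j jA; apply: Hu_V; apply: hU.
Qed.

Lemma W_Va i x : i \notin A -> W x -> W (Va i x).
Proof.
move=> iA /W_iff [hK hU]; apply/W_iff; split.
  by move=> a aA; apply: Ker_Va; [apply: contraNneq iA => <- | exact: hK].
by move=> j jA; apply: Hu_Va; apply: hU.
Qed.

Lemma W_onto i y : i \notin A -> W y -> exists x, W x /\ y = V i x.
Proof.
move=> iA hy; exists (Va i y); split; first exact: W_Va.
have /W_iff [_ hU] := hy; have := HuVVa 1 (hU i iA); by [].
Qed.

Lemma part2 i j : i \notin A -> j \notin A -> i != j ->
  forall S : H -> H, (forall x, W x -> W (S x)) ->
  (forall x y, W x -> W y -> ip (V i x) y = ip x (S y)) ->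
  forall x, W x -> S (V j x) = (z i j)^* *: V j (S x).
Proof.
move=> iA jA ij S hS hSa.
have eqS : forall y, W y -> S y = Va i y.
  move=> y Wy; set d := S y - Va i y.
  have Wd : W d by apply: (subspaceB W_sub); [exact: hS | exact: W_Va].
  apply/eqP; rewrite -subr_eq0; apply/eqP/ipdef.
  by rewrite -/d {2}/d ipBr -hSa // hadj subrr.
move=> x Wx; rewrite eqS; last exact: W_V.
by rewrite hdnc // -eqS.
Qed.

Lemma unitc_mul (a b : R[i]) : a * a^* = 1 -> b * b^* = 1 -> (a * b) * (a * b)^* = 1.
Proof. by move=> ha hb; rewrite rmorphM /= mulrACA ha hb mulr1. Qed.

Lemma unitc_exp (a : R[i]) t : a * a^* = 1 -> a ^+ t * (a ^+ t)^* = 1.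
Proof.
move=> ha; elim: t => [|t IH]; first by rewrite expr0 rmorph1 mulr1.
by rewrite exprS; apply: unitc_mul.
Qed.

Lemma V_prodV i s k x : uniq s -> i \in s ->
  exists c : R[i], c * c^* = 1 /\
    V i (prodV Vf s k x) = c *: prodV Vf s (fun j => if j == i then (k j).+1 else k j) x.
Proof.
elim: s => [|j s IH] //= /andP[nj us]; rewrite in_cons => /orP[/eqP ej|iis].
  subst j; exists 1; split; first by rewrite rmorph1 mulr1.
  rewrite scale1r eqxx -iterS; congr (iter _ _ _).
  apply: prodV_eq => j' hj'; case: eqP => // e; subst j'.
  by rewrite hj' in nj.
have ji : (j == i) = false by apply/negbTE; apply: contraNneq nj => ->.
have [c [hc e]] := IH us iis.
exists (z i j ^+ k j * c); split.
  by apply: unitc_mul => //; apply: unitc_exp; apply: zz1; rewrite eq_sym ji.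
rewrite ji /Vf (iter_comm (c := z i j) (linV i) (linV j)); last first.
  by move=> y; apply: commV; rewrite eq_sym ji.
by rewrite [V i _]e (linZ (lin_iter _ (linV j))) scalerA.
Qed.

Lemma part4 i k : i \in A ->
  seteq (img (V i) (img (prodV Vf (enum A) k) W))
        (img (prodV Vf (enum A) (fun j => if j == i then (k j).+1 else k j)) W).
Proof.
move=> iA; have iA' : i \in enum A by rewrite mem_enum.
move=> y; split.
  move=> [_ [[w [Ww ->]] ->]].
  have [c [hc e]] := V_prodV k w (enum_uniq _) iA'.
  exists (c *: w); split; first exact: subspaceZ W_sub _.
  by rewrite e (linZ (lin_prodV _ _)).
move=> [w [Ww ->]].
have [c [hc e]] := V_prodV k w (enum_uniq _) iA'.
exists (prodV Vf (enum A) k (c^* *: w)); split.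
  by exists (c^* *: w); split => //; exact: subspaceZ W_sub _.
by rewrite (linZ (lin_prodV _ _)) linearZ /= e scalerA mulrC hc scale1r.
Qed.

Lemma Pr_pres_Hu (X : H -> Prop) b y : closed_subspace ip X ->
  (forall u, X u -> X (V b u)) -> (forall u, X u -> X (Va b u)) ->
  Hu b y -> Hu b (orthproj ip X y).
Proof.
move=> hX h1 h2 hy t; have [w [_ ->]] := hy t.
exists (orthproj ip X w); split => //.
rewrite (iter_comm (c := 1) (Pr_lin hX) (linV b)); first by rewrite expr1n scale1r.
move=> x; rewrite scale1r; exact: (Pr_comm _ hX (linV b) (hadj b) h1 h2).
Qed.

Lemma Pr_pres_Hi (X : H -> Prop) b y : closed_subspace ip X ->
  (forall u, X u -> X (V b u)) -> (forall u, X u -> X (Va b u)) ->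
  Hi b y -> Hi b (orthproj ip X y).
Proof.
move=> hX h1 h2 hy.
have hc := closed_pre (Hi_cs b) (Pr_lin hX) (fun x => Pr_bnd x hX).
apply: (closed_span_min hc _ hy) => _ [t [e [he ->]]].
rewrite /= (iter_comm (c := 1) (Pr_lin hX) (linV b)); last first.
  move=> x; rewrite scale1r; exact: (Pr_comm _ hX (linV b) (hadj b) h1 h2).
rewrite expr1n scale1r; apply: Hi_gen.
rewrite /Ker (_ : Va b _ = orthproj ip X (Va b e)); first by rewrite he (lin0 (Pr_lin hX)).
apply: esym; exact: (Pr_comm _ hX (linVa b) (adjl b) h2 h1).
Qed.

Lemma PrU_Hu a b y : a != b -> Hu b y -> Hu b (orthproj ip (Huni (Vf a)) y).
Proof.
move=> ab; apply: (Pr_pres_Hu (X := Hu a)); first exact: Hu_cs.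
  by move=> u; apply: Hu_V.
by move=> u; apply: Hu_Va.
Qed.

Lemma PrU_Hi a b y : a != b -> Hi b y -> Hi b (orthproj ip (Huni (Vf a)) y).
Proof.
move=> ab; apply: (Pr_pres_Hi (X := Hu a)); first exact: Hu_cs.
  by move=> u; apply: Hu_V.
by move=> u; apply: Hu_Va.
Qed.

Lemma PrI_Hu a b y : a != b -> Hu b y -> Hu b (orthproj ip (Hiso ip (Vf a) (Va a)) y).
Proof.
move=> ab; apply: (Pr_pres_Hu (X := Hi a)); first exact: Hi_cs.
  by move=> u; apply: Hi_V.
by move=> u; apply: Hi_Va.
Qed.

Lemma PrI_Hi a b y : a != b -> Hi b y -> Hi b (orthproj ip (Hiso ip (Vf a) (Va a)) y).
Proof.
move=> ab; apply: (Pr_pres_Hi (X := Hi a)); first exact: Hi_cs.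
  by move=> u; apply: Hi_V.
by move=> u; apply: Hi_Va.
Qed.

Definition PU (s : seq 'I_n) :=
  foldr (fun j f => fun x => orthproj ip (Huni (Vf j)) (f x)) id s.
Definition PI (s : seq 'I_n) :=
  foldr (fun i f => fun x => orthproj ip (Hiso ip (Vf i) (Va i)) (f x)) (PU (enum (~: A))) s.

Lemma chain_uni s : uniq s -> forall x j, j \in s -> Hu j (PU s x).
Proof.
elim: s => [|j0 s IH] //= /andP[nj us] x j; rewrite in_cons => /orP[/eqP ->|js].
  exact: (Pr_spec _ (Hu_cs j0)).1.
apply: PrU_Hu; last exact: IH.
by apply: contraNneq nj => ->.
Qed.

Lemma chain_iso s : uniq s -> (forall i, i \in s -> i \in A) -> forall x,
  (forall i, i \in s -> Hi i (PI s x)) /\ (forall j, j \notin A -> Hu j (PI s x)).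
Proof.
elim: s => [|i0 s IH] /=.
  move=> _ _ x; split => // j jA; apply: chain_uni; first exact: enum_uniq.
  by rewrite mem_enum finset.in_setC.
move=> /andP[ni us] hA x.
have [IH1 IH2] := IH us (fun i hi => hA i (mem_behead (s := i0 :: s) hi)) x.
have i0A : i0 \in A by apply: hA; exact: mem_head.
split.
  move=> i; rewrite in_cons => /orP[/eqP ->|is'].
    exact: (Pr_spec _ (Hi_cs i0)).1.
  apply: PrI_Hi; last exact: IH1.
  by apply: contraNneq ni => ->.
move=> j jA; apply: PrI_Hu; last exact: IH2.
by apply: contraNneq jA => <-.
Qed.

Lemma chain_uni_id s x : (forall j, j \in s -> Hu j x) -> PU s x = x.
Proof.
elim: s => [|j s IH] //= h.
rewrite IH; last by move=> j' hj'; apply: h; rewrite in_cons hj' orbT.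
by apply: Pr_id; [exact: Hu_sub | apply: h; exact: mem_head].
Qed.

Lemma chain_iso_id s x : (forall i, i \in s -> Hi i x) -> (forall j, j \notin A -> Hu j x) ->
  PI s x = x.
Proof.
move=> h1 h2; elim: s h1 => [|i s IH] /= h1.
  by apply: chain_uni_id => j; rewrite mem_enum finset.in_setC; apply: h2.
rewrite IH; last by move=> i' hi'; apply: h1; rewrite in_cons hi' orbT.
by apply: Pr_id; [exact: Hi_sub | apply: h1; exact: mem_head].
Qed.

Definition Fk (k : {k : 'I_n -> nat | forall j, j \notin A -> k j = 0%N}) :=
  img (prodV Vf (enum A) (proj1_sig k)) W.
Definition Msp := closed_span ip (fun y => exists k, Fk k y).

Lemma gen_M k w : W w -> Msp (prodV Vf (enum A) k w).
Proof.
move=> Ww; apply: closed_span_sub.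
have hk : forall j, j \notin A -> (fun j => if j \in A then k j else 0%N) j = 0%N.
  by move=> j /negbTE ->.
exists (exist _ _ hk), w; split => //=.
by apply: prodV_eq => j; rewrite mem_enum => ->.
Qed.

Lemma M_Hi i x : i \in A -> Msp x -> Hi i x.
Proof.
move=> iA; apply: closed_span_min; first exact: Hi_cs.
move=> _ [k [w [Ww ->]]]; apply: Hi_prodV.
have /W_iff [hK _] := Ww.
by apply: (Hi_gen 0); apply: hK.
Qed.

Lemma M_Hu j x : j \notin A -> Msp x -> Hu j x.
Proof.
move=> jA; apply: closed_span_min; first exact: Hu_cs.
move=> _ [k [w [Ww ->]]]; apply: Hu_prodV.
by have /W_iff [_ hU] := Ww; apply: hU.
Qed.

Lemma orth_gen s k k' x y : uniq s -> (forall j, j \in s -> j \in A) -> Kset x -> Kset y ->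
  (exists j, j \in s /\ k j <> k' j) ->
  ip (prodV Vf s k x) (prodV Vf s k' y) = 0.
Proof.
move=> + + hx hy; elim: s => [|j s IH] /=; first by move=> _ _ [j []].
move=> /andP[nj us] hA [j0 [hj0 hk]].
have jA : j \in A by apply: hA; exact: mem_head.
have KP : Ker j (prodV Vf s k x) by apply: Ker_prodV => //; apply: hx.
have KQ : Ker j (prodV Vf s k' y) by apply: Ker_prodV => //; apply: hy.
set P := prodV Vf s k x in KP *; set Q := prodV Vf s k' y in KQ *.
case: (ltngtP (k j) (k' j)) => hkj.
- have e : k' j = (k j + (k' j - (k j).+1).+1)%N by rewrite addnS -addSn subnKC.
  by rewrite e iterD /Vf ipiterVV iterS adjr KP ip0l.
- have e : k j = (k' j + (k j - (k' j).+1).+1)%N by rewrite addnS -addSn subnKC.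
  by rewrite e iterD /Vf ipiterVV iterS hadj KQ ip0r.
- rewrite hkj /Vf ipiterVV; apply: IH => //.
    by move=> j' hj'; apply: hA; rewrite in_cons hj' orbT.
  exists j0; split => //; move: hj0; rewrite in_cons => /orP[/eqP e|//].
  by subst j0; rewrite hkj in hk.
Qed.

Lemma phi s : uniq s -> (forall i, i \in s -> i \in A) -> forall u,
  (forall j, j \notin A -> Hu j u) -> (forall i, i \in s -> Hi i u) ->
  (forall i, i \in A -> i \notin s -> Va i u = 0) ->
  (forall k w, W w -> ip (prodV Vf s k w) u = 0) -> u = 0.
Proof.
elim: s => [|i s IH] /=.
  move=> _ _ u hU _ hK ho; apply: ipdef.
  have Wu : W u by apply/W_iff; split => // i iA; apply: hK.
  exact: (ho (fun _ => 0%N) u Wu).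
move=> /andP[ni us] hA u hU hI hK ho.
have iA : i \in A by apply: hA; exact: mem_head.
pose D y := y - V i (Va i y).
pose ut t := D (iter t (Va i) u).
have sD : forall P : H -> Prop, subspace P -> (forall y, P y -> P (V i y)) ->
    (forall y, P y -> P (Va i y)) -> forall t, P (iter t (Va i) u) -> P (ut t).
  move=> P hP h1 h2 t hp; rewrite /ut /D.
  by apply: subspaceB => //; apply: h1; apply: h2.
have ut0 : forall t, ut t = 0.
  move=> t; apply: IH => //.
  - by move=> i' hi'; apply: hA; rewrite in_cons hi' orbT.
  - move=> j jA; apply: (sD (Hu j)); [exact: Hu_sub | by move=> y; apply: Hu_V
        | by move=> y; apply: Hu_Va | apply: (iter_pres (P := Hu j)); [by move=> y; apply: Hu_Va | exact: hU j jA]].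
  - move=> i' hi'; have i'i : i' != i by apply: contraNneq ni => <-.
    apply: (sD (Hi i')); [exact: Hi_sub | by move=> y; apply: Hi_V
        | by move=> y; apply: Hi_Va | apply: (iter_pres (P := Hi i')); [by move=> y; apply: Hi_Va
        | by apply: hI; rewrite in_cons hi' orbT]].
  - move=> i'' i''A ni''.
    have [-> |ne] := eqVneq i'' i.
      by rewrite /ut /D (linB (linVa i)) VaV subrr.
    apply: (sD (Ker i'')); [exact: Ker_sub | by move=> y; apply: Ker_V
        | by move=> y; apply: Ker_Va | apply: (iter_pres (P := Ker i'')); [by move=> y; apply: Ker_Va
        | by apply: hK => //; rewrite in_cons negb_or ne ni'']].
  - move=> k w Ww.
    have /W_iff [hKw _] := Ww.
    have Kg : Ker i (prodV Vf s k w) by apply: Ker_prodV => //; apply: hKw.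
    rewrite /ut /D ipBr adjr Kg ip0l subr0 -ipiter.
    pose kt := fun j => if j == i then t else k j.
    have := ho kt w Ww; rewrite /= /kt eqxx.
    rewrite (prodV_eq (m' := k)) // => j hj.
    by case: eqP => // e; subst j; rewrite hj in ni.
have hIu := hI i (mem_head _ _).
have orth : forall x, Hi i x -> ip x u = 0.
  apply: closed_span_min; first exact: closed_orth.
  move=> _ [t [e [he ->]]].
  rewrite /= ipiter.
  have : ut t = 0 by apply: ut0.
  rewrite /ut /D => /eqP; rewrite subr_eq0 => /eqP ->.
  by rewrite adjr he ip0l.
exact: ipdef (orth u hIu).
Qed.

Lemma enumA_sub i : i \in enum A -> i \in A.
Proof. by rewrite mem_enum. Qed.

Lemma HA_M x : HA ip Vf Va A x -> Msp x.
Proof.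
rewrite /HA /= => [[y [_ ->]]].
rewrite -/(PU (enum (~: A))) -/(PI (enum A)).
set xx := PI (enum A) y.
have [hI hU] := chain_iso (enum_uniq A) enumA_sub y.
rewrite -/xx in hI hU.
have [m [Mm hm]] := PT (closed_span_cs (fun y => exists k, Fk k y)) xx.
have -> : xx = m; last by [].
apply/eqP; rewrite -subr_eq0; apply/eqP.
apply: (@phi (enum A) (enum_uniq A) enumA_sub).
- move=> j jA; apply: (subspaceB (Hu_sub j)); [exact: hU | exact: M_Hu].
- move=> i hi; apply: (subspaceB (Hi_sub i)); [exact: hI | apply: M_Hi => //].
  by rewrite -mem_enum.
- by move=> i iA; rewrite mem_enum iA.
- move=> k w Ww; rewrite ipC hm ?conjC0 //; exact: gen_M.
Qed.

Lemma M_HA x : Msp x -> HA ip Vf Va A x.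
Proof.
move=> Mx; rewrite /HA /=; exists x; split => //.
rewrite -/(PU (enum (~: A))) -/(PI (enum A)).
apply: esym; apply: chain_iso_id.
  by move=> i; rewrite mem_enum => iA; apply: M_Hi.
by move=> j jA; apply: M_Hu.
Qed.

Lemma W_M x : W x -> Msp x.
Proof.
move=> Wx; have := gen_M (fun _ => 0%N) Wx; by rewrite prodV0.
Qed.

Lemma main_sec :
  let W := WA Vf Va A in
  let HA_ := HA ip Vf Va A in
  [/\ (forall x, W x -> HA_ x) /\
      orth_dsum ip
        (fun k : {k : 'I_n -> nat | forall j, j \notin A -> k j = 0} =>
           img (prodV Vf (enum A) (proj1_sig k)) W)
        HA_,
      (forall i, i \notin A ->
         [/\ forall x, W x -> W (V i x),
             forall x, W x -> W (Va i x) &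
             forall y, W y -> exists x, W x /\ y = V i x]),
      (forall i j, i \notin A -> j \notin A -> i != j ->
         forall S : H -> H, (forall x, W x -> W (S x)) ->
           (forall x y, W x -> W y -> ip (V i x) y = ip x (S y)) ->
           forall x, W x -> S (V j x) = (z i j)^* *: V j (S x)),
      (forall i, i \in A -> forall x, W x -> Va i x = 0) &
      (forall i, i \in A -> forall k : 'I_n -> nat,
         seteq (img (V i) (img (prodV Vf (enum A) k) W))
               (img (prodV Vf (enum A)
                       (fun j => if j == i then (k j).+1 else k j)) W))].
Proof.
move=> W' HA'; split.
- split; first by move=> x Wx; apply: M_HA; apply: W_M.
  split.
  + move=> k; split.
      by apply: img_sub; [exact: lin_prodV | exact: W_sub].
    apply: img_closed; [exact: lin_prodV | exact: hnorm_prodV | exact: W_closed].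
  + move=> [k hk] [k' hk'] ne x y [x' [Wx' ->]] [y' [Wy' ->]] /=.
    have [j hj] : exists j, k j <> k' j.
      apply: NNPP => hne; apply: ne.
      have e : k = k' by apply: functional_extensionality => j; apply: NNPP => hj; apply: hne; exists j.
      subst k'; congr (exist _ _ _); exact: proof_irrelevance.
    have jA : j \in A.
      apply: contraT => jA; exfalso; apply: hj; by rewrite hk // hk'.
    have /W_iff [hKx _] := Wx'; have /W_iff [hKy _] := Wy'.
    apply: orth_gen => //; [exact: enum_uniq | exact: enumA_sub | exists j; split => //].
    by rewrite mem_enum.
  + by move=> x; split; [exact: HA_M | exact: M_HA].
- by move=> i iA; split => x; [exact: W_V | exact: W_Va | exact: W_onto].
- exact: part2.
- by move=> i iA x /W_iff [hK _]; apply: hK.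
- by move=> i iA k; apply: part4.
Qed.

End Ops.
End Hilb.

Theorem theorem3p6
  (R : realType) (H : lmodType R[i]) (ip : H -> H -> R[i])
  (hH : is_hilbert ip)
  (n : nat) (hn : (0 < n)%N)
  (z : 'I_n -> 'I_n -> R[i])
  (hz : forall i j : 'I_n, i != j -> `|z i j| = 1 /\ z j i = (z i j)^*)
  (V : 'I_n -> {linear H -> H}) (Va : 'I_n -> H -> H)
  (hiso : forall i, h_isometry ip (V i))
  (hadj : forall i, h_adjoint ip (V i) (Va i))
  (hdnc : forall i j : 'I_n, i != j ->
            forall x, Va i (V j x) = (z i j)^* *: V j (Va i x))
  (A : {set 'I_n}) :
  let Vf := fun i => (V i : H -> H) in
  let W := WA Vf Va A in
  let HA_ := HA ip Vf Va A in
  [/\ (forall x, W x -> HA_ x) /\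
      orth_dsum ip
        (fun k : {k : 'I_n -> nat | forall j, j \notin A -> k j = 0} =>
           img (prodV Vf (enum A) (proj1_sig k)) W)
        HA_,
      (* (1) W reduces V_i and V_i|_W is unitary, for i in A^c *)
      (forall i, i \notin A ->
         [/\ forall x, W x -> W (V i x),
             forall x, W x -> W (Va i x) &
             forall y, W y -> exists x, W x /\ y = V i x]),
      (* (2) (V_i|_W)^* (V_j|_W) = conj(z_ij) (V_j|_W) (V_i|_W)^* on W *)
      (forall i j, i \notin A -> j \notin A -> i != j ->
         forall S : H -> H, (forall x, W x -> W (S x)) ->
           (forall x y, W x -> W y -> ip (V i x) y = ip x (S y)) ->
           forall x, W x -> S (V j x) = (z i j)^* *: V j (S x)),
      (* (3) V_i^* |_W = 0 for i in A *)
      (forall i, i \in A -> forall x, W x -> Va i x = 0) &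
      (* (4) *)
      (forall i, i \in A -> forall k : 'I_n -> nat,
         seteq (img (V i) (img (prodV Vf (enum A) k) W))
               (img (prodV Vf (enum A)
                       (fun j => if j == i then (k j).+1 else k j)) W))].
Proof.
case: hH => h1 h2 h3 h4 h5.
exact: (main_sec h1 h2 h3 h4 h5 hz hiso hadj hdnc A).
Qed.
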